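(* Let $\mu_t(s,a)=\mathbb P_{\pi^{\mathrm{expl}}}(s_t=s,\ a_t=a)$ for $t\in[T]$, $(s,a)\in\mathcal S\times\mathcal A$. Suppose that for every $(s,a)$ there is some $t$ with $\mu_t(s,a)>0$. Then the covering length $L$ satisfies $$\frac{\log 2}{2\min_{(s,a)\in\mathcal S\times\mathcal A}\sum_{t\in[T]}\mu_t(s,a)}\ \le\ L\ \le\ \left\lceil\frac{\log(2SA)}{\min_{(s,a)\in\mathcal S\times\mathcal A}\max_{t\in[T]}\mu_t(s,a)}\right\rceil .$$
   Context: Deterministic finite-horizon MDP $\mathcal M=(\mathcal S,\mathcal A,T,s_1,f,R)$ with finite state set of size $S=|\mathcal S|$ and action set of size $A=|\mathcal A|$, start state $s_1$, transitions $s_{t+1}=f(s_t,a_t)$, steps $t\in[T]$. $\pi^{\mathrm{expl}}$ is a fixed exploration policy (maps $\pi^{\mathrm{expl}}_t:\mathcal S\to\Delta(\mathcal A)$), and $\mathbb P_{\pi^{\mathrm{expl}}}$ is the law of an episode from $s_1$ following it. The covering length $L$ is the least number of independent episodes run with $\pi^{\mathrm{expl}}$ such that, with probability at least $1/2$, every pair $(s,a)\in\mathcal S\times\mathcal A$ is visited (at some step of some episode). *)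

(* Defs.v *)
From HB Require Import structures.
From mathcomp Require Import all_boot all_order all_algebra.
From mathcomp Require Import reals exp.
Set Implicit Arguments. Unset Strict Implicit. Unset Printing Implicit Defensive.
Import Order.TTheory GRing.Theory Num.Theory.
Local Open Scope ring_scope.

Section MDP.
Variables (R : realType) (S A : finType) (T : nat) (s1 : S) (f : S -> A -> S).
(* exploration policy: pi t s is a distribution over A (hypotheses in theorem) *)
Variable pi : 'I_T -> S -> A -> R.

(* an episode is determined by its action sequence (deterministic dynamics) *)
Definition episode := {ffun 'I_T -> A}.

(* state s_t at (0-indexed) step t: s_1 followed by f applied to previous actions *)
Definition state_at (w : episode) (t : 'I_T) : S :=
  foldl f s1 (take t [seq w i | i <- enum 'I_T]).

Definition traj_prob (w : episode) : R :=
  \prod_(t : 'I_T) pi t (state_at w t) (w t).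

Definition mu (t : 'I_T) (s : S) (a : A) : R :=
  \sum_(w : episode | (state_at w t == s) && (w t == a)) traj_prob w.

Definition visits (w : episode) (p : S * A) : bool :=
  [exists t : 'I_T, (state_at w t == p.1) && (w t == p.2)].

Definition cover_prob (n : nat) : R :=
  \sum_(ws : {ffun 'I_n -> episode}
          | [forall p : S * A, exists i : 'I_n, visits (ws i) p])
     \prod_(i : 'I_n) traj_prob (ws i).

Definition is_covering_length (L : nat) : Prop :=
  1 / 2 <= cover_prob L /\ forall m : nat, (m < L)%N -> cover_prob m < 1 / 2.
End MDP.

(* minimum of F over a finite type (0 if the type is empty) *)
Definition fmin (R : realType) (X : finType) (F : X -> R) : R :=
  match [pick x : X] with
  | Some x0 => \big[Order.min/F x0]_(x : X) F x
  | None => 0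
  end.

(* Main.v *)
Require Import Defs.
From HB Require Import structures.
From mathcomp Require Import all_boot all_order all_algebra.
From mathcomp Require Import reals exp sequences ring lra.
Import Order.TTheory GRing.Theory Num.Theory.
Local Open Scope ring_scope.

Section Tot.
Variables (R : realType) (A : finType).

Definition consf (n : nat) (a : A) (w : {ffun 'I_n -> A}) : {ffun 'I_n.+1 -> A} :=
  [ffun i : 'I_n.+1 => if unlift ord0 i is Some j then w j else a].

Lemma consf_bij n : bijective (fun p : A * {ffun 'I_n -> A} => consf n p.1 p.2).
Proof.
exists (fun w : {ffun 'I_n.+1 -> A} => (w ord0, [ffun j => w (lift ord0 j)])).
  move=> [a w] /=; rewrite /consf ffunE unlift_none; congr pair.
  by apply/ffunP => j; rewrite !ffunE liftK.
move=> w; apply/ffunP => i; rewrite /consf ffunE /=.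
case: unliftP => [j ->|->] //; by rewrite ffunE.
Qed.

Lemma total_mass n (g : 'I_n -> seq A -> A -> R) :
  (forall t pre, \sum_a g t pre a = 1) ->
  \sum_(w : {ffun 'I_n -> A})
     \prod_(t : 'I_n) g t (take t [seq w i | i <- enum 'I_n]) (w t) = 1.
Proof.
elim: n g => [|n IH] g hg.
  rewrite (eq_bigr (fun _ => 1)); last by move=> w _; rewrite big_ord0.
  by rewrite sumr_const card_ffun card_ord expn0.
rewrite (reindex _ (onW_bij _ (consf_bij n))) /=.
rewrite -(pair_big xpredT xpredT (fun a w => \prod_(t : 'I_n.+1) g t
   (take t [seq consf n a w i | i <- enum 'I_n.+1]) (consf n a w t))) /=.
transitivity (\sum_a g ord0 [::] a); last exact: hg.
apply: eq_bigr => a _.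
transitivity (g ord0 [::] a * \sum_(w : {ffun 'I_n -> A})
     \prod_(t : 'I_n) g (lift ord0 t) (a :: take t [seq w i | i <- enum 'I_n]) (w t)); last first.
  by rewrite (IH (fun t pre b => g (lift ord0 t) (a :: pre) b)) ?mulr1 // => t pre; apply: hg.
rewrite mulr_sumr; apply: eq_bigr => w _.
rewrite big_ord_recl /= take0 /consf ffunE unlift_none; congr (_ * _).
apply: eq_bigr => t _; rewrite ffunE liftK enum_ordSl /= ffunE unlift_none.
rewrite -map_comp; congr (g _ (_ :: take _ _) _).
by apply: eq_map => j /=; rewrite ffunE liftK.
Qed.
End Tot.

Set Implicit Arguments. Unset Strict Implicit.
Section Main.
Variables (R : realType) (S A : finType) (T : nat) (s1 : S)
  (f : S -> A -> S) (pi : 'I_T -> S -> A -> R).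
Hypothesis pi_ge0 : forall t s a, 0 <= pi t s a.
Hypothesis pi_sum1 : forall t s, \sum_(a : A) pi t s a = 1.

Local Notation tp := (traj_prob s1 f pi).
Local Notation ep := {ffun 'I_T -> A}.

Lemma tp_ge0 (w : ep) : 0 <= tp w.
Proof. by apply: prodr_ge0 => t _. Qed.

Lemma tp_sum : \sum_(w : ep) tp w = 1.
Proof.
exact: (@total_mass R A T (fun t pre a => pi t (foldl f s1 pre) a) (fun t pre => pi_sum1 t _)).
Qed.

Definition Pr (E : pred ep) := \sum_(w | E w) tp w.

Lemma Pr_ge0 E : 0 <= Pr E.
Proof. by apply: sumr_ge0 => w _; apply: tp_ge0. Qed.

Lemma Pr_compl E : Pr (predC E) = 1 - Pr E.
Proof.
by rewrite /Pr -tp_sum (bigID E predT) /= addrC addrK.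
Qed.

Lemma Pr_le1 E : Pr E <= 1.
Proof. by rewrite -subr_ge0 -Pr_compl Pr_ge0. Qed.

Lemma Pr_sub (E F : pred ep) : (forall w, E w -> F w) -> Pr E <= Pr F.
Proof.
move=> EF; rewrite /Pr [X in X <= _]big_mkcond [X in _ <= X]big_mkcond.
apply: ler_sum => w _; case: ifP => Ew; first by rewrite (EF _ Ew).
by case: ifP => _ //; apply: tp_ge0.
Qed.

Definition pv (p : S * A) := Pr (fun w => visits s1 f w p).

Lemma mu_le_pv t s a : mu s1 f pi t s a <= pv (s, a).
Proof.
apply: Pr_sub => w Ew; apply/existsP; exists t; exact: Ew.
Qed.

Lemma pv_le_sum s a : pv (s, a) <= \sum_(t : 'I_T) mu s1 f pi t s a.
Proof.
rewrite /pv /Pr /mu big_mkcond (exchange_big_dep xpredT) //=.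
apply: ler_sum => w _; case: ifP => [/existsP [t Ht]|_].
  rewrite (bigD1 t) //= lerDl; apply: sumr_ge0 => i _; exact: tp_ge0.
by apply: sumr_ge0 => i _; apply: tp_ge0.
Qed.

Lemma prodPr n (E : pred ep) :
  \sum_(ws : {ffun 'I_n -> ep} | [forall i, E (ws i)]) \prod_(i : 'I_n) tp (ws i)
  = Pr E ^+ n.
Proof.
rewrite -[in RHS](card_ord n) -prodr_const /Pr.
rewrite [RHS](eq_bigr (fun _ => \sum_(w : ep) (if E w then tp w else 0)));
  last by move=> i _; rewrite big_mkcond.
rewrite bigA_distr_bigA /= big_mkcond; apply: eq_bigr => ws _.
case: ifP => [/forallP h|/negbT].
  by apply: eq_bigr => i _; rewrite h.
rewrite negb_forall => /existsP [i Hi].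
by rewrite (bigD1 i) //= (negbTE Hi) mul0r.
Qed.


Lemma cover_total n : \sum_(ws : {ffun 'I_n -> ep}) \prod_(i : 'I_n) tp (ws i) = 1.
Proof.
have := prodPr n predT.
have -> : Pr predT = 1 by rewrite /Pr -tp_sum.
rewrite expr1n => H; rewrite -[RHS]H.
by apply: eq_bigl => ws; apply/esym/forallP => i.
Qed.

Lemma Pr_nvis p : Pr (fun w => ~~ visits s1 f w p) = 1 - pv p.
Proof. exact: (Pr_compl (fun w => visits s1 f w p)). Qed.

Lemma cover_upper n c : (forall p, (1 - pv p) ^+ n <= c) ->
  1 - #|{: S * A}|%:R * c <= cover_prob s1 f pi n.
Proof.
move=> hc; rewrite /cover_prob.
set C := fun ws : {ffun 'I_n -> ep} => [forall p : S * A, exists i : 'I_n, visits s1 f (ws i) p].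
have := cover_total n; rewrite (bigID C) /= => htot.
rewrite -[in X in X - _ <= _]htot -addrA gerDl subr_le0.
apply: (@le_trans _ _ (\sum_(ws : {ffun 'I_n -> ep}) \sum_(p : S * A)
    (if [forall i, ~~ visits s1 f (ws i) p] then \prod_(i : 'I_n) tp (ws i) else 0))).
  rewrite big_mkcond; apply: ler_sum => ws _; case: ifP => hC; last first.
    by apply: sumr_ge0 => p _; case: ifP => _ //; apply: prodr_ge0 => i _; apply: tp_ge0.
  move: hC; rewrite /C negb_forall => /existsP [p]; rewrite negb_exists => hp.
  rewrite (bigD1 p) //= hp lerDl; apply: sumr_ge0 => q _.
  by case: ifP => _ //; apply: prodr_ge0 => i _; apply: tp_ge0.
rewrite exchange_big /=.
apply: (@le_trans _ _ (\sum_(p : S * A) c)); last by rewrite sumr_const mulr_natl.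
apply: ler_sum => p _; rewrite -big_mkcond /=.
by rewrite (prodPr n (fun w => ~~ visits s1 f w p)) Pr_nvis.
Qed.

Lemma cover_lower n p : cover_prob s1 f pi n <= 1 - (1 - pv p) ^+ n.
Proof.
rewrite /cover_prob.
have := cover_total n; rewrite (bigID (fun ws : {ffun 'I_n -> ep} =>
   [forall i, ~~ visits s1 f (ws i) p])) /= => htot.
rewrite -Pr_nvis -(prodPr n (fun w => ~~ visits s1 f w p)).
rewrite -[in X in X - _]htot addrAC subrr add0r.
rewrite [X in X <= _]big_mkcond [X in _ <= X]big_mkcond.
apply: ler_sum => ws _; case: ifP => hC; last first.
  by case: ifP => _ //; apply: prodr_ge0 => i _; apply: tp_ge0.
move/forallP: hC => /(_ p) /existsP [i hi].
rewrite ifT //; rewrite negb_forall; apply/existsP; exists i; by rewrite hi.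
Qed.

End Main.

Lemma fmin_le (R : realType) (X : finType) (F : X -> R) x : fmin F <= F x.
Proof.
rewrite /fmin; case: pickP => [x0 _|h]; first exact: bigmin_le.
by have := h x.
Qed.

Lemma fmin_att (R : realType) (X : finType) (F : X -> R) (x1 : X) :
  exists x, fmin F = F x.
Proof.
rewrite /fmin; case: pickP => [x0 _|h]; last by have := h x1.
elim/big_ind: _ => [|u v [a ->] [b ->]|i _]; [by exists x0| |by exists i].
by case: (leP (F a) (F b)) => _; [exists a|exists b].
Qed.

Lemma fmin_none (R : realType) (X : finType) (F : X -> R) :
  (forall x : X, False) -> fmin F = 0.
Proof. by rewrite /fmin; case: pickP => [x0 _ /(_ x0)|]. Qed.

Lemma half_calc (R : realType) (y : R) : 0 < y -> 1 / 2 <= 1 - y / (2 * y).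
Proof. move=> hy. have -> : y / (2 * y) = 1 / 2 by field; rewrite gt_eqF. lra. Qed.

Lemma ln2_le1 (R : realType) : ln (2 : R) <= 1.
Proof.
have h : (2 : R) <= expR 1 by apply: le_trans (expR_ge1Dx 1); lra.
by rewrite -[X in _ <= X](expRK 1) ler_ln // posrE ?expR_gt0.
Qed.

Lemma key_ineq (R : realType) (p : R) (L : nat) : 0 < p -> p <= 1 -> (1 <= L)%N ->
  (1 - p) ^+ L <= 1 / 2 -> ln 2 <= L%:R * (2 * p).
Proof.
move=> p0 p1 L1 hc.
have hL : (1 : R) <= L%:R by rewrite ler1n.
case: (leP (1 / 2) p) => hp.
  apply: le_trans (ln2_le1 R) _; nra.
have e1 : expR (- (2 * p)) <= 1 - p.
  rewrite expRN -[X in X <= _]mul1r ler_pdivrMr ?expR_gt0 //.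
  have := expR_ge1Dx (2 * p) => hE.
  have hq : 1 <= (1 - p) * (1 + 2 * p) by nra.
  nra.
have e2 : expR (- (2 * p)) ^+ L <= 1 / 2.
  apply: le_trans hc; apply: lerXn2r => //; rewrite nnegrE ?expR_ge0 //; lra.
rewrite -expRM_natl mulrN in e2.
set y := L%:R * (2 * p) in e2 *.
have hy : 2 <= expR y.
  have := expRxMexpNx_1 y => h1.
  have := expR_gt0 y => h2.
  have := expR_gt0 (- y) => h3.
  nra.
by rewrite -[X in _ <= X](expRK y) ler_ln // posrE ?expR_gt0.
Qed.

Lemma half_flip (R : realType) (y : R) : 1 / 2 <= 1 - y -> y <= 1 / 2.
Proof. lra. Qed.

Lemma half_lt1 (R : realType) : (1 / 2 : R) < 1.
Proof. lra. Qed.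

Unset Implicit Arguments. Set Strict Implicit.

Theorem mainTheorem11 (R : realType) (S A : finType) (T : nat) (s1 : S)
  (f : S -> A -> S) (pi : 'I_T -> S -> A -> R)
  (pi_ge0 : forall t s a, 0 <= pi t s a)
  (pi_sum1 : forall t s, \sum_(a : A) pi t s a = 1)
  (hmu : forall (s : S) (a : A), exists t : 'I_T, 0 < mu s1 f pi t s a) :
  (exists L : nat, is_covering_length s1 f pi L) /\
  forall L : nat, is_covering_length s1 f pi L ->
    ln 2 / (2 * fmin (fun p : S * A => \sum_(t : 'I_T) mu s1 f pi t p.1 p.2))
      <= L%:R /\
    (L%:Z <= Num.ceil (ln ((2 * #|S| * #|A|)%N%:R)
        / fmin (fun p : S * A => \big[Order.max/0]_(t : 'I_T) mu s1 f pi t p.1 p.2)))%R.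
Proof.
case: (pickP (@predT A)) => [a0 _ | hA]; last first.
  have hnone : forall p : S * A, False by case=> _ a; have := hA a.
  have cov : forall n, cover_prob s1 f pi n = 1.
    move=> n; rewrite /cover_prob -[RHS](cover_total s1 f pi_sum1 n).
    by apply: eq_bigl => ws; apply/forallP => p; case: (hnone p).
  split.
    exists 0%N; split => //; rewrite cov; exact: ltW (half_lt1 R).
  move=> L [_ hL]; have L0 : L = 0%N.
    case: L hL => // L /(_ 0%N isT); rewrite cov => h.
    by have := lt_trans h (half_lt1 R); rewrite ltxx.
  by rewrite L0 !fmin_none // mulr0 invr0 !mulr0 ceil0.
set M := fmin (fun p : S * A => \big[Order.max/0]_(t : 'I_T) mu s1 f pi t p.1 p.2).
set Q := fmin (fun p : S * A => \sum_(t : 'I_T) mu s1 f pi t p.1 p.2).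
have Mpos : 0 < M.
  have [[s a] hM] := fmin_att (fun p : S * A => \big[Order.max/0]_(t : 'I_T) mu s1 f pi t p.1 p.2) (s1, a0).
  rewrite /M hM; have [t ht] := hmu s a; apply: lt_le_trans ht _.
  have h := le_bigmax 0 (fun t => mu s1 f pi t s a) t. exact: h.
have pvM : forall p, M <= pv s1 f pi p.
  move=> [s a]; apply: le_trans (fmin_le _ (s, a)) _.
  apply: bigmax_le => [|t _]; first exact: Pr_ge0.
  exact: mu_le_pv.
set K := (2 * #|S| * #|A|)%N.
have Kpos : (0 < K)%N.
  rewrite /K !muln_gt0 /=; apply/andP; split; apply/card_gt0P; by [exists s1|exists a0].
set x := ln (K%:R : R) / M.
have x_ge0 : 0 <= x.
  apply: divr_ge0 (ltW Mpos); apply: ln_ge0; by rewrite ler1n.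
set n := `|Num.ceil x|%N.
have nE : (n%:Z = Num.ceil x).
  by rewrite /n gez0_abs // ceil_ge0 (lt_le_trans _ x_ge0) // ltrN10.
have hn : x <= n%:R.
  by apply: le_trans (ceil_ge x) _; rewrite -nE.
have cov_n : 1 / 2 <= cover_prob s1 f pi n.
  apply: le_trans (cover_upper pi_ge0 pi_sum1 (c := (K%:R)^-1) _).
    rewrite card_prod /K -mulnA (natrM R 2); apply: half_calc.
    by rewrite ltr0n muln_gt0; apply/andP; split; apply/card_gt0P; [exists s1|exists a0].
  move=> p.
  have h0 : 0 <= 1 - pv s1 f pi p by rewrite subr_ge0; apply: Pr_le1.
  have h1 : 1 - pv s1 f pi p <= expR (- M).
    apply: le_trans (expR_ge1Dx _); exact: lerB (lexx 1) (pvM p).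
  have h2 : 0 <= expR (- M) := expR_ge0 _.
  apply: le_trans (lerXn2r n h0 h2 h1) _.
  rewrite -expRM_natl.
  have -> : (K%:R : R)^-1 = expR (- ln K%:R) by rewrite expRN lnK // posrE ltr0n.
  rewrite ler_expR mulrN lerN2 -ler_pdivrMr //.
split.
  have exP : exists m, 1 / 2 <= cover_prob s1 f pi m by exists n.
  exists (ex_minn exP); case: ex_minnP => m hm hmin; split => // k hk.
  rewrite ltNge; apply/negP => h; have := hmin k h.
  by move=> /(leq_trans hk); rewrite ltnn.
move=> L [hL1 hL2]; split; last first.
  rewrite -/x -nE lez_nat leqNgt; apply/negP => hLn.
  by have := hL2 n hLn; rewrite ltNge cov_n.
have [[s a] hQ] := fmin_att (fun p : S * A => \sum_(t : 'I_T) mu s1 f pi t p.1 p.2) (s1, a0).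
set p := pv s1 f pi (s, a).
have pQ : p <= Q by rewrite /Q hQ; exact: pv_le_sum.
have ppos : 0 < p := lt_le_trans Mpos (pvM _).
have Qpos : 0 < Q := lt_le_trans ppos pQ.
have p1 : p <= 1 by apply: Pr_le1.
have hc : (1 - p) ^+ L <= 1 / 2.
  exact: half_flip (le_trans hL1 (cover_lower s1 f pi_ge0 pi_sum1 L (s, a))).
have L1 : (1 <= L)%N.
  case: L {hL1 hL2} hc => // ; rewrite expr0 => h.
  by have := lt_le_trans (half_lt1 R) h; rewrite ltxx.
rewrite ler_pdivrMr ?mulr_gt0 //.
apply: le_trans (key_ineq ppos p1 L1 hc) _.
by rewrite ler_wpM2l // ler_wpM2l.
Qed.
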